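(* Let $\sigma$ be a signature containing $\triangleright$ and let $\mathcal{A}$ be a $\sigma$-algebra that is representable by partial functions. Then for every $a \in \mathcal{A}$, the set ${\downarrow}a = \{b \in \mathcal{A} : b \le a\}$, with least element $0$, greatest element $a$, meet given by $\lhd$ and complementation given by $\overline{b} := b \triangleright a$, is a Boolean algebra. Any representation $\theta$ of $\mathcal{A}$ by partial functions restricts to a representation of the Boolean algebra ${\downarrow}a$ as a field of sets over $\theta(a)$ (i.e. $\theta$ maps ${\downarrow}a$ injectively to subsets of $\theta(a)$, sending $\lhd$ to $\cap$, complement to complement relative to $\theta(a)$, $0$ to $\emptyset$ and $a$ to $\theta(a)$). Moreover, this restricted representation of ${\downarrow}a$ is complete (i.e. preserves all existing meets of nonempty subsets as intersections and all existing joins as unions) if either (1) $\theta$ is a meet-complete representation of $\mathcal{A}$, or (2) $\sigma$ contains $\wedge$ and $\theta$ is a join-complete representation of $\mathcal{A}$.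
   Context: Signatures $\sigma$ are sets of operation symbols drawn from: $\triangleright$ (antidomain restriction, binary), $;$ (composition, binary), $\wedge$ (intersection, binary), $\mathrm{upd}$ (update, binary), $\sqcup$ (preferential union, binary), $\mathsf{D}$ (domain, unary), $\mathsf{A}$ (antidomain, unary). An algebra of partial functions of signature $\sigma$ is a $\sigma$-algebra whose elements are partial functions on a set $X$ (the union of all their domains and ranges), with operations: $f \triangleright g = \{(x,y) \in g : x \notin \mathrm{dom}(f)\}$; $f ; g = \{(x,z) : \exists y\,((x,y)\in f, (y,z) \in g)\}$; $f \wedge g = f \cap g$; $\mathrm{upd}(f,g)(x)$ equals $f(x)$ if $f(x)$ is defined and $g(x)$ undefined, equals $g(x)$ if both are defined, and is undefined otherwise; $(f \sqcup g)(x)$ equals $f(x)$ if defined, else $g(x)$ if defined, else undefined; $\mathsf{D}(f)$ is the identity on $\mathrm{dom}(f)$; $\mathsf{A}(f)$ is the identity on $X \setminus \mathrm{dom}(f)$. A representation of a $\sigma$-algebra $\mathcal{A}$ by partial functions is an isomorphism from $\mathcal{A}$ onto an algebra of partial functions of signature $\sigma$; $\mathcal{A}$ is representable if one exists. In any algebra with $\triangleright$, define $0 := a \triangleright a$ and $a \lhd b := (a \triangleright b) \triangleright b$ (in partial functions: restriction of $b$ to $\mathrm{dom}(a)$), and $a \le b :\iff a \lhd b = a$. For representable algebras $\le$ is a partial order with least element $0$, and every representation $\theta$ satisfies $a \le b \iff \theta(a) \subseteq \theta(b)$. A representation $\theta$ is join complete if for every subset $S$ for which $\bigvee S$ exists,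 $\theta(\bigvee S) = \bigcup \theta[S]$; it is meet complete if for every nonempty subset $S$ for which $\bigwedge S$ exists, $\theta(\bigwedge S) = \bigcap \theta[S]$. *)

(* Defs.v *)
Inductive sym : Type :=
  | SAres
  | SComp
  | SMeet
  | SUpd
  | SPref
  | SDom
  | SAdom.

Definition signature := sym -> Prop.

(** An algebra carrying an interpretation of every symbol; for a
    sigma-algebra only the operations whose symbols lie in sigma matter
    (the others are arbitrary and never constrained). *)
Record alg : Type := {
  car : Type;
  o_ares : car -> car -> car;
  o_comp : car -> car -> car;
  o_meet : car -> car -> car;
  o_upd  : car -> car -> car;
  o_pref : car -> car -> car;
  o_dom  : car -> car;
  o_adom : car -> car
}.

(** Partial functions on X, as functional binary relations. *)
Definition rel (X : Type) := X -> X -> Prop.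
Definition functional {X : Type} (f : rel X) : Prop :=
  forall x y z, f x y -> f x z -> y = z.
Definition releq {X : Type} (f g : rel X) : Prop := forall x y, f x y <-> g x y.
Definition subrel {X : Type} (f g : rel X) : Prop := forall x y, f x y -> g x y.
Definition rdom {X : Type} (f : rel X) (x : X) : Prop := exists y, f x y.

Definition r_ares {X} (f g : rel X) : rel X := fun x y => g x y /\ ~ rdom f x.
Definition r_comp {X} (f g : rel X) : rel X := fun x z => exists y, f x y /\ g y z.
Definition r_meet {X} (f g : rel X) : rel X := fun x y => f x y /\ g x y.
Definition r_upd {X} (f g : rel X) : rel X :=
  fun x y => (f x y /\ ~ rdom g x) \/ (rdom f x /\ g x y).
Definition r_pref {X} (f g : rel X) : rel X :=
  fun x y => f x y \/ (~ rdom f x /\ g x y).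
Definition r_dom {X} (f : rel X) : rel X := fun x y => x = y /\ rdom f x.
(* antidomain relative to the base set X (the whole type X; the
   representation below requires X to be the union of all domains and
   ranges of represented elements) *)
Definition r_adom {X} (f : rel X) : rel X := fun x y => x = y /\ ~ rdom f x.

Definition is_rep (sigma : signature) (A : alg) (X : Type)
    (th : car A -> rel X) : Prop :=
  (forall a, functional (th a)) /\
  (forall x : X, exists a, (exists y, th a x y) \/ (exists y, th a y x)) /\
  (forall a b, releq (th a) (th b) -> a = b) /\
  (sigma SAres -> forall a b, releq (th (o_ares A a b)) (r_ares (th a) (th b))) /\
  (sigma SComp -> forall a b, releq (th (o_comp A a b)) (r_comp (th a) (th b))) /\
  (sigma SMeet -> forall a b, releq (th (o_meet A a b)) (r_meet (th a) (th b))) /\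
  (sigma SUpd  -> forall a b, releq (th (o_upd A a b))  (r_upd (th a) (th b))) /\
  (sigma SPref -> forall a b, releq (th (o_pref A a b)) (r_pref (th a) (th b))) /\
  (sigma SDom  -> forall a, releq (th (o_dom A a)) (r_dom (th a))) /\
  (sigma SAdom -> forall a, releq (th (o_adom A a)) (r_adom (th a))).

Definition representable (sigma : signature) (A : alg) : Prop :=
  exists (X : Type) (th : car A -> rel X), is_rep sigma A X th.

Definition zero (A : alg) (a : car A) : car A := o_ares A a a.
Definition restr (A : alg) (a b : car A) : car A := o_ares A (o_ares A a b) b.
Definition le (A : alg) (a b : car A) : Prop := restr A a b = a.
Definition down (A : alg) (a : car A) : car A -> Prop := fun b => le A b a.

Definition is_lub (A : alg) (D S : car A -> Prop) (j : car A) : Prop :=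
  D j /\ (forall s, S s -> le A s j) /\
  (forall u, D u -> (forall s, S s -> le A s u) -> le A j u).
Definition is_glb (A : alg) (D S : car A -> Prop) (m : car A) : Prop :=
  D m /\ (forall s, S s -> le A m s) /\
  (forall u, D u -> (forall s, S s -> le A u s) -> le A u m).

Definition runion {X} {T} (th : T -> rel X) (S : T -> Prop) : rel X :=
  fun x y => exists s, S s /\ th s x y.
Definition rinter {X} {T} (th : T -> rel X) (S : T -> Prop) : rel X :=
  fun x y => forall s, S s -> th s x y.

Definition allA (A : alg) : car A -> Prop := fun _ => True.

Definition join_complete (A : alg) {X} (th : car A -> rel X) : Prop :=
  forall S j, is_lub A (allA A) S j -> releq (th j) (runion th S).
Definition meet_complete (A : alg) {X} (th : car A -> rel X) : Prop :=
  forall S m, (exists s, S s) -> is_glb A (allA A) S m ->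
    releq (th m) (rinter th S).

Definition boolean_algebra {T : Type} (D : T -> Prop) (z o : T)
    (m : T -> T -> T) (c : T -> T) : Prop :=
  let j := fun x y => c (m (c x) (c y)) in
  D z /\ D o /\ (forall x y, D x -> D y -> D (m x y)) /\
  (forall x, D x -> D (c x)) /\
  forall x y w, D x -> D y -> D w ->
    m x (m y w) = m (m x y) w /\ j x (j y w) = j (j x y) w /\
    m x y = m y x /\ j x y = j y x /\
    m x (j x y) = x /\ j x (m x y) = x /\
    j x z = x /\ m x o = x /\
    m x (j y w) = j (m x y) (m x w) /\ j x (m y w) = m (j x y) (j x w) /\
    j x (c x) = o /\ m x (c x) = z.

Definition field_of_sets_rep (A : alg) (a : car A) {X} (th : car A -> rel X) : Prop :=
  (forall b, down A a b -> subrel (th b) (th a)) /\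
  (forall b c, down A a b -> down A a c -> releq (th b) (th c) -> b = c) /\
  (forall b c, down A a b -> down A a c ->
     releq (th (restr A b c)) (fun x y => th b x y /\ th c x y)) /\
  (forall b, down A a b ->
     releq (th (o_ares A b a)) (fun x y => th a x y /\ ~ th b x y)) /\
  releq (th (zero A a)) (fun _ _ => False) /\
  releq (th a) (th a).

Definition complete_on_down (A : alg) (a : car A) {X} (th : car A -> rel X) : Prop :=
  (forall S, (forall s, S s -> down A a s) ->
     forall j, is_lub A (down A a) S j -> releq (th j) (runion th S)) /\
  (forall S, (forall s, S s -> down A a s) -> (exists s, S s) ->
     forall m, is_glb A (down A a) S m -> releq (th m) (rinter th S)).

(* Main.v *)
Require Import Defs.
From Stdlib Require Import Classical Setoid.


Lemma rep_fun {sigma A X th} (Hr : is_rep sigma A X th) : forall a, functional (th a).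
Proof. apply Hr. Qed.
Lemma rep_inj {sigma A X th} (Hr : is_rep sigma A X th) :
  forall a b, releq (th a) (th b) -> a = b.
Proof. apply Hr. Qed.
Lemma rep_ares {sigma A X th} (Hr : is_rep sigma A X th) (Hs : sigma SAres) :
  forall a b x y, th (o_ares A a b) x y <-> (th b x y /\ ~ rdom (th a) x).
Proof. intros. destruct Hr as (_&_&_&H&_). apply (H Hs). Qed.
Lemma rep_meet {sigma A X th} (Hr : is_rep sigma A X th) (Hs : sigma SMeet) :
  forall a b x y, th (o_meet A a b) x y <-> (th a x y /\ th b x y).
Proof. intros. destruct Hr as (_&_&_&_&_&H&_). apply (H Hs). Qed.

Lemma dom_ares {sigma A X th} (Hr : is_rep sigma A X th) (Hs : sigma SAres) :
  forall a b x, rdom (th (o_ares A a b)) x <-> (rdom (th b) x /\ ~ rdom (th a) x).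
Proof.
  intros. unfold rdom at 1. split.
  - intros [y Hy]. apply (rep_ares Hr Hs) in Hy. destruct Hy. split; [exists y|]; auto.
  - intros [[y Hy] Hn]. exists y. apply (rep_ares Hr Hs). auto.
Qed.

Lemma th_restr {sigma A X th} (Hr : is_rep sigma A X th) (Hs : sigma SAres) :
  forall b c x y, th (restr A b c) x y <-> (th c x y /\ rdom (th b) x).
Proof.
  intros. unfold restr. rewrite (rep_ares Hr Hs), (dom_ares Hr Hs).
  split; intros [H1 H2]; split; auto.
  - apply NNPP. intro Hn. apply H2. split; auto. exists y; auto.
  - intros [_ Hn]; auto.
Qed.

Lemma le_iff {sigma A X th} (Hr : is_rep sigma A X th) (Hs : sigma SAres) :
  forall b c, le A b c <-> subrel (th b) (th c).
Proof.
  intros b c. unfold le. split.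
  - intros He x y Hb. rewrite <- He in Hb. apply (th_restr Hr Hs) in Hb. tauto.
  - intros Hsub. apply (rep_inj Hr). intros x y. rewrite (th_restr Hr Hs). split.
    + intros [Hc [z Hz]]. assert (z = y) by (apply (rep_fun Hr c x); auto). subst; auto.
    + intros Hb. split; auto. exists y; auto.
Qed.

Lemma le_trans' {sigma A X th} (Hr : is_rep sigma A X th) (Hs : sigma SAres) :
  forall b c d, le A b c -> le A c d -> le A b d.
Proof.
  intros b c d H1 H2. rewrite (le_iff Hr Hs) in *. intros x y H; auto.
Qed.

Lemma down_char {sigma A X th} (Hr : is_rep sigma A X th) (Hs : sigma SAres) :
  forall a b x y, down A a b -> (th b x y <-> (th a x y /\ rdom (th b) x)).
Proof.
  intros a b x y Hd. unfold down in Hd. rewrite (le_iff Hr Hs) in Hd. split.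
  - intros H; split; [apply Hd; auto | exists y; auto].
  - intros [Ha [z Hz]]. assert (z = y) by (apply (rep_fun Hr a x); auto). subst; auto.
Qed.

Lemma down_dom {sigma A X th} (Hr : is_rep sigma A X th) (Hs : sigma SAres) :
  forall a b x, down A a b -> rdom (th b) x -> rdom (th a) x.
Proof.
  intros a b x Hd [y Hy]. unfold down in Hd. rewrite (le_iff Hr Hs) in Hd. exists y; auto.
Qed.

Lemma eq_down {sigma A X th} (Hr : is_rep sigma A X th) (Hs : sigma SAres) :
  forall a b c, down A a b -> down A a c -> (forall x, rdom (th b) x <-> rdom (th c) x) -> b = c.
Proof.
  intros a b c Hb Hc Hx. apply (rep_inj Hr). intros x y.
  rewrite (down_char Hr Hs a b), (down_char Hr Hs a c), Hx by assumption. tauto.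
Qed.

Lemma down_top {sigma A X th} (Hr : is_rep sigma A X th) (Hs : sigma SAres) :
  forall a, down A a a.
Proof. intros. unfold down. rewrite (le_iff Hr Hs). intros x y H; auto. Qed.

Lemma down_compl {sigma A X th} (Hr : is_rep sigma A X th) (Hs : sigma SAres) :
  forall a b, down A a (o_ares A b a).
Proof. intros. unfold down. rewrite (le_iff Hr Hs). intros x y H.
  apply (rep_ares Hr Hs) in H; tauto. Qed.

Lemma down_restr {sigma A X th} (Hr : is_rep sigma A X th) (Hs : sigma SAres) :
  forall a b c, down A a c -> down A a (o_ares A (o_ares A b c) c).
Proof. intros a b c Hc. unfold down in *. rewrite (le_iff Hr Hs) in *. intros x y H.
  apply (rep_ares Hr Hs) in H. apply Hc; tauto. Qed.

Ltac closure Hr Hs :=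
  repeat first [ apply (down_compl Hr Hs) | apply (down_restr Hr Hs)
               | apply (down_top Hr Hs) | assumption ].

Ltac atoms :=
  repeat match goal with |- context [rdom ?f ?x] =>
    lazymatch goal with
    | _ : rdom f x \/ ~ rdom f x |- _ => fail
    | _ => pose proof (classic (rdom f x))
    end end.

Ltac bsolve Hr Hs a :=
  apply (eq_down Hr Hs a); [closure Hr Hs | closure Hr Hs |];
  let x := fresh "x" in intro x;
  repeat rewrite (dom_ares Hr Hs);
  repeat match goal with H : down _ a ?b |- _ =>
    pose proof (down_dom Hr Hs a b x H); clear H end;
  atoms; tauto.

Lemma ba_part {sigma A X th} (Hr : is_rep sigma A X th) (Hs : sigma SAres) (a : car A) :
  boolean_algebra (down A a) (zero A a) a (restr A) (fun b => o_ares A b a).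
Proof.
  unfold boolean_algebra, zero, restr. cbv zeta.
  split; [closure Hr Hs|]. split; [closure Hr Hs|].
  split; [intros; closure Hr Hs|]. split; [intros; closure Hr Hs|].
  intros x y w Hx Hy Hw.
  repeat split; bsolve Hr Hs a.
Qed.


Lemma fos_part {sigma A X th} (Hr : is_rep sigma A X th) (Hs : sigma SAres) (a : car A) :
  field_of_sets_rep A a th.
Proof.
  unfold field_of_sets_rep. split; [|split; [|split; [|split; [|split]]]].
  - intros b Hb. unfold down in Hb. rewrite (le_iff Hr Hs) in Hb. exact Hb.
  - intros b c _ _ H. apply (rep_inj Hr); auto.
  - intros b c Hb Hc x y. rewrite (th_restr Hr Hs), (down_char Hr Hs a b x y Hb),
      (down_char Hr Hs a c x y Hc). tauto.
  - intros b Hb x y. rewrite (rep_ares Hr Hs), (down_char Hr Hs a b x y Hb).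
    split; intros [H1 H2]; split; auto; intro H3; apply H2; auto; destruct H3; auto.
  - intros x y. unfold zero. rewrite (rep_ares Hr Hs). split; [|tauto].
    intros [H1 H2]. apply H2. exists y; auto.
  - intros x y; tauto.
Qed.

Lemma glb_all {sigma A X th} (Hr : is_rep sigma A X th) (Hs : sigma SAres) (a : car A) :
  forall S m, (exists s, S s) -> (forall s, S s -> down A a s) ->
  is_glb A (down A a) S m -> is_glb A (allA A) S m.
Proof.
  intros S m [s0 Hs0] HS [Hm [Hl Hg]]. split; [exact I|]. split; auto.
  intros u _ Hu. apply Hg; auto. unfold down. apply (le_trans' Hr Hs) with s0; auto.
  apply HS; auto.
Qed.

Lemma lub_all {sigma A X th} (Hr : is_rep sigma A X th) (Hs : sigma SAres) (Hm : sigma SMeet)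
  (a : car A) :
  forall S j, (forall s, S s -> down A a s) ->
  is_lub A (down A a) S j -> is_lub A (allA A) S j.
Proof.
  intros S j HS [Hj [Hl Hg]]. split; [exact I|]. split; auto.
  intros u _ Hu. apply (le_trans' Hr Hs) with (o_meet A u a).
  - apply Hg.
    + unfold down. rewrite (le_iff Hr Hs). intros x y H. apply (rep_meet Hr Hm) in H. tauto.
    + intros s Hs0. rewrite (le_iff Hr Hs). intros x y H. apply (rep_meet Hr Hm).
      split.
      * specialize (Hu s Hs0). rewrite (le_iff Hr Hs) in Hu. auto.
      * specialize (HS s Hs0). unfold down in HS. rewrite (le_iff Hr Hs) in HS. auto.
  - rewrite (le_iff Hr Hs). intros x y H. apply (rep_meet Hr Hm) in H. tauto.
Qed.

Lemma complete_part {sigma A X th} (Hr : is_rep sigma A X th) (Hs : sigma SAres) (a : car A) :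
  (meet_complete A th \/ (sigma SMeet /\ join_complete A th)) -> complete_on_down A a th.
Proof.
  intros Hc. split.
  -
    intros S HS j Hj x y. split.
    2:{ intros [s [Hs0 Hsx]]. destruct Hj as [_ [Hl _]]. specialize (Hl s Hs0).
        rewrite (le_iff Hr Hs) in Hl. auto. }
    intros Hjx.
    destruct Hc as [Hmc | [Hm Hjc]].
    + destruct (classic (exists s, S s)) as [Hne | Hemp].
      * set (T := fun t => exists s, S s /\ t = o_ares A s a).
        assert (Hg : is_glb A (down A a) T (o_ares A j a)).
        { destruct Hj as [HjD [Hl Hgr]]. split; [apply (down_compl Hr Hs)|]. split.
          - intros t [s [Hs0 ->]]. rewrite (le_iff Hr Hs). intros x' y' H.
            rewrite (rep_ares Hr Hs) in *. destruct H as [H1 H2]. split; auto.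
            intros [z Hz]. apply H2. exists z. specialize (Hl s Hs0).
            rewrite (le_iff Hr Hs) in Hl. auto.
          - intros u Hu Hut.
            assert (Hju : le A j (o_ares A u a)).
            { apply Hgr; [apply (down_compl Hr Hs)|]. intros s Hs0.
              rewrite (le_iff Hr Hs). intros x' y' H. apply (rep_ares Hr Hs). split.
              + specialize (HS s Hs0). unfold down in HS. rewrite (le_iff Hr Hs) in HS. auto.
              + intros [z Hz]. assert (Ht : T (o_ares A s a)) by (exists s; auto).
                specialize (Hut _ Ht). rewrite (le_iff Hr Hs) in Hut. apply Hut in Hz.
                apply (rep_ares Hr Hs) in Hz. apply (proj2 Hz). exists y'; auto. }
            rewrite (le_iff Hr Hs) in *. intros x' y' H. apply (rep_ares Hr Hs). split.
            + unfold down in Hu. rewrite (le_iff Hr Hs) in Hu. auto.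
            + intros [z Hz]. apply Hju in Hz. apply (rep_ares Hr Hs) in Hz.
              apply (proj2 Hz). exists y'; auto. }
        assert (HT : exists t, T t) by (destruct Hne as [s Hs0]; exists (o_ares A s a); exists s; auto).
        pose proof (Hmc T _ HT (glb_all Hr Hs a T _ HT
                      (fun t Ht => match Ht with ex_intro _ s (conj _ e) =>
                         eq_ind_r (fun t => down A a t) (down_compl Hr Hs a s) e end) Hg)) as Heq.
        assert (Hax : th a x y).
        { destruct Hj as [HjD _]. unfold down in HjD. rewrite (le_iff Hr Hs) in HjD. auto. }
        assert (Hn : ~ th (o_ares A j a) x y).
        { rewrite (rep_ares Hr Hs). intros [_ H]. apply H. exists y; auto. }
        assert (Hn' : ~ rinter th T x y) by (intro H; apply Hn, Heq, H). clear Hn. rename Hn' into Hn. unfold rinter in Hn.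
        apply not_all_ex_not in Hn. destruct Hn as [t Ht].
        apply imply_to_and in Ht. destruct Ht as [[s [Hs0 ->]] Hn].
        exists s. split; auto. rewrite (rep_ares Hr Hs) in Hn.
        apply (down_char Hr Hs a s x y (HS s Hs0)). split; auto.
        apply NNPP. intro H; apply Hn; auto.
      * exfalso. destruct Hj as [_ [_ Hgr]].
        assert (Hz : le A j (zero A a)).
        { apply Hgr. apply (down_compl Hr Hs). intros s Hs0. exfalso; apply Hemp; eauto. }
        rewrite (le_iff Hr Hs) in Hz. apply Hz in Hjx. unfold zero in Hjx.
        apply (rep_ares Hr Hs) in Hjx. destruct Hjx as [H1 H2]. apply H2. exists y; auto.
    + apply (Hjc S j (lub_all Hr Hs Hm a S j HS Hj)). auto.
  -
    intros S HS Hne m Hmg x y. split.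
    { intros Hmx s Hs0. destruct Hmg as [_ [Hl _]]. specialize (Hl s Hs0).
      rewrite (le_iff Hr Hs) in Hl. auto. }
    intros Hall.
    destruct Hc as [Hmc | [Hm Hjc]].
    + apply (Hmc S m Hne (glb_all Hr Hs a S m Hne HS Hmg)). auto.
    + destruct Hne as [s0 Hs0].
      assert (Hax : th a x y).
      { specialize (HS s0 Hs0). unfold down in HS. rewrite (le_iff Hr Hs) in HS. auto. }
      apply NNPP. intro Hnm.
      assert (Hnd : ~ rdom (th m) x).
      { intros [z Hz]. apply Hnm. destruct Hmg as [HmD _].
        apply (down_char Hr Hs a m x y HmD). split; auto. exists z; auto. }
      set (T := fun t => exists s, S s /\ t = o_ares A s a).
      assert (Hlub : is_lub A (down A a) T (o_ares A m a)).
      { destruct Hmg as [HmD [Hl Hgr]]. split; [apply (down_compl Hr Hs)|]. split.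
        - intros t [s [Hs1 ->]]. rewrite (le_iff Hr Hs). intros x' y' H.
          rewrite (rep_ares Hr Hs) in *. destruct H as [H1 H2]. split; auto.
          intros [z Hz]. apply H2. exists z. specialize (Hl s Hs1).
          rewrite (le_iff Hr Hs) in Hl. auto.
        - intros u Hu Hut.
          assert (Hum : le A (o_ares A u a) m).
          { apply Hgr; [apply (down_compl Hr Hs)|]. intros s Hs1.
            rewrite (le_iff Hr Hs). intros x' y' H. apply (rep_ares Hr Hs) in H.
            destruct H as [H1 H2].
            destruct (classic (rdom (th s) x')) as [Hd | Hd].
            - apply (down_char Hr Hs a s x' y' (HS s Hs1)). auto.
            - exfalso. apply H2. exists y'.
              assert (Ht : T (o_ares A s a)) by (exists s; auto).
              specialize (Hut _ Ht). rewrite (le_iff Hr Hs) in Hut. apply Hut.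
              apply (rep_ares Hr Hs). auto. }
          rewrite (le_iff Hr Hs) in *. intros x' y' H. apply (rep_ares Hr Hs) in H.
          destruct H as [H1 H2].
          destruct (classic (rdom (th u) x')) as [Hd | Hd].
          + apply (down_char Hr Hs a u x' y' Hu). auto.
          + exfalso. apply H2. exists y'. apply Hum. apply (rep_ares Hr Hs). auto. }
      assert (HT : forall t, T t -> down A a t).
      { intros t [s [_ ->]]. apply (down_compl Hr Hs). }
      pose proof (Hjc T _ (lub_all Hr Hs Hm a T _ HT Hlub) x y) as Heq.
      assert (Hin : th (o_ares A m a) x y) by (apply (rep_ares Hr Hs); auto).
      apply Heq in Hin. destruct Hin as [t [[s [Hs1 ->]] Ht]].
      apply (rep_ares Hr Hs) in Ht. apply (proj2 Ht). exists y. apply Hall; auto.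
Qed.

Theorem lemma3p3 (sigma : signature) (A : alg) :
  sigma SAres -> representable sigma A ->
  forall a : car A,
    boolean_algebra (down A a) (zero A a) a (restr A) (fun b => o_ares A b a) /\
    (forall (X : Type) (th : car A -> rel X), is_rep sigma A X th ->
       field_of_sets_rep A a th /\
       ((meet_complete A th \/ (sigma SMeet /\ join_complete A th)) ->
          complete_on_down A a th)).
Proof.
  intros Hs [X0 [th0 Hr0]] a. split; [exact (ba_part Hr0 Hs a)|].
  intros X th Hr. split; [exact (fos_part Hr Hs a) | exact (complete_part Hr Hs a)].
Qed.
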